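(* Let $n\ge2$, $\omega\in\mathbb{R}^n$, $k\in\mathbb{R}_{>0}^n$ satisfy (IC1) $\sum_\mu\omega_\mu=0$, (IC2) $\omega\ne0$, (IC3) $\left|\frac{\omega_1}{k_1}\right|\le\cdots\le\left|\frac{\omega_n}{k_n}\right|$, and (IC4) $k_1\ge k_2\ge\cdots\ge k_n$. For $\sigma\in\{-1,+1\}^n$ let $f_\sigma(R)=-R+\frac1n\sum_{\mu=1}^n\sigma_\mu\sqrt{k_\mu^2R-\omega_\mu^2}$. (1) If $\sigma=(+1,\ldots,+1)$ and $f_\sigma$ has no positive roots, then $f_{\sigma'}$ has no positive roots for every $\sigma'\in\{-1,+1\}^n$. (2) If $\sigma$ has exactly one entry equal to $-1$ and $f_\sigma$ has no positive roots, then $f_{\sigma'}$ has no positive roots for every $\sigma'\in\{-1,+1\}^n$ that is smaller than $\sigma$ in the binary ordering. (3) Suppose $\sigma$ has at least two entries equal to $-1$ and $f_\sigma$ has no positive roots. Let $\ell$ be the position of the second-to-last entry equal to $-1$ in $\sigma$, and write $\sigma=(\rho_1,\rho_2)$ with $\rho_1=(\sigma_1,\ldots,\sigma_{\ell-1},-1)$ and $\rho_2=(\sigma_{\ell+1},\ldots,\sigma_n)$. Then for every $\rho_2'\in\{-1,+1\}^{n-\ell}$ that is smaller than $\rho_2$ in the binary ordering, $f_{(\rho_1,\rho_2')}$ has no positive roots.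
   Context: Square roots are nonnegative real square roots; a positive root of $f_\sigma$ is a real $R>0$ with $k_\mu^2R-\omega_\mu^2\ge0$ for all $\mu$ and $f_\sigma(R)=0$. Binary ordering: a sign vector $\tau=(\tau_1,\ldots,\tau_m)\in\{-1,+1\}^m$ is identified with the integer whose binary digits, from most significant to least significant, are $b_1b_2\cdots b_m$ with $b_i=1$ if $\tau_i=+1$ and $b_i=0$ if $\tau_i=-1$ (e.g. $(+1,-1)\equiv 10_2=2$); vectors are compared via these integers. *)

(* Defs.v *)
From HB Require Import structures.
From mathcomp Require Import all_boot all_order all_algebra.
From mathcomp Require Import reals.
Set Implicit Arguments. Unset Strict Implicit. Unset Printing Implicit Defensive.
Import Order.TTheory GRing.Theory Num.Theory.
Local Open Scope ring_scope.

(* Sign vectors: a sign vector in {-1,+1}^m is a [seq bool] of size m,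
   with [true] standing for +1 and [false] for -1. *)
Definition sgnR {R : pzRingType} (b : bool) : R := if b then 1 else -1.

(* Binary ordering: the integer with binary digits b_1 ... b_m (most
   significant first), b_i = 1 iff tau_i = +1. *)
Definition binval (s : seq bool) : nat := foldl (fun acc b => acc.*2 + nat_of_bool b)%N 0%N s.

Definition f_sigma {R : realType} (n : nat) (omega k : 'I_n -> R)
  (sigma : seq bool) (x : R) : R :=
  - x + n%:R^-1 * \sum_(i < n) sgnR (nth true sigma i) * Num.sqrt (k i ^+ 2 * x - omega i ^+ 2).

Definition is_pos_root {R : realType} (n : nat) (omega k : 'I_n -> R)
  (sigma : seq bool) (x : R) : Prop :=
  0 < x /\ (forall i : 'I_n, 0 <= k i ^+ 2 * x - omega i ^+ 2) /\ f_sigma omega k sigma x = 0.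

Definition no_pos_root {R : realType} (n : nat) (omega k : 'I_n -> R)
  (sigma : seq bool) : Prop :=
  forall x : R, ~ is_pos_root omega k sigma x.

(* Main.v *)
Require Import Defs.
From HB Require Import structures.
From mathcomp Require Import all_boot all_order all_algebra.
From mathcomp Require Import reals.
Import Order.TTheory GRing.Theory Num.Theory.
Local Open Scope ring_scope.
From mathcomp Require Import all_classical topology normedtype realfun.
From mathcomp Require Import lra zify.
Import numFieldNormedType.Exports.
Local Open Scope classical_set_scope.
Local Open Scope ring_scope.
Lemma binval_foldl a s :
  foldl (fun acc b => acc.*2 + nat_of_bool b)%N a s = (a * 2 ^ size s + binval s)%N.
Proof.
rewrite /binval; elim: s a => [|b s IH] a /=; first by rewrite muln1 addn0.
rewrite IH (IH (0.*2 + b)%N) expnS -!muln2; lia.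
Qed.

Lemma binval_cons b s : binval (b :: s) = (b * 2 ^ size s + binval s)%N.
Proof. by rewrite {1}/binval /= binval_foldl. Qed.

Lemma binval_lt s : (binval s < 2 ^ size s)%N.
Proof.
elim: s => [|b s IH] //=; rewrite binval_cons expnS; case: b => /=; lia.
Qed.

Lemma count1 t : count negb t = 1%N ->
  exists j, [/\ (j < size t)%N, nth true t j = false &
                forall i, i != j -> nth true t i = true].
Proof.
elim: t => [|b t IH] //=; case: b => /=.
  rewrite add0n => /IH [j [jt tj hi]]; exists j.+1; split => //.
  by case=> [|i] //= ne; apply: hi.
move=> [] /eqP; rewrite -leqn0 leqNgt -has_count => /hasPn h.
exists 0%N; split => //; case=> [|i] //= _.
case: (ltnP i (size t)) => hi; last by rewrite nth_default.
by have := h _ (mem_nth true hi); case: (nth true t i).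
Qed.

Lemma binval_key s t : size s = size t -> count negb t = 1%N ->
  (binval s < binval t)%N ->
  exists p j, [/\ (p <= j)%N, (j < size t)%N, nth true t j = false,
     nth true s p = false & forall i, i != j -> nth true t i = true].
Proof.
elim: t s => [|b t IH] [|c s] //= [] hs.
rewrite !binval_cons hs; case: b => /=.
  rewrite add0n => ct.
  case: c => /= hlt.
    have [|p [j [pj jt tj sp hi]]] := IH s hs ct; first lia.
    exists p.+1, j.+1; split => //; case=> [|i] //= ne; apply: hi; exact: ne.
  have [j [jt tj hi]] := @count1 t ct.
  exists 0%N, j.+1; split => //; case=> [|i] //= ne; apply: hi; exact: ne.
move=> [] /eqP; rewrite -leqn0 leqNgt -has_count => /hasPn h.
case: c => /= hlt.
  have := binval_lt t; lia.
exists 0%N, 0%N; split => //; case=> [|i] //= _.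
case: (ltnP i (size t)) => hi; last by rewrite nth_default.
by have := h _ (mem_nth true hi); case: (nth true t i).
Qed.
Section A.
Variables (R : realType) (n : nat) (omega k : 'I_n -> R).

Lemma sum_cont (r : seq 'I_n) (F : 'I_n -> R -> R) :
  (forall i, continuous (F i)) -> continuous (fun x => \sum_(i <- r) F i x).
Proof.
move=> hF; elim: r => [|a r IH] x.
  under eq_fun do rewrite big_nil. exact: cvg_cst.
under eq_fun do rewrite big_cons.
by apply: continuousD; [exact: hF|exact: IH].
Qed.

Lemma f_cont s : continuous (f_sigma omega k s).
Proof.
move=> x; rewrite /f_sigma.
apply: continuousD; first exact: continuousN.
apply: continuousM; first exact: cvg_cst.
apply: sum_cont => i y.
apply: cvgM; first exact: cvg_cst.
apply: (@continuous_comp _ _ _ (fun z => k i ^+ 2 * z - omega i ^+ 2)); last exact: sqrt_continuous.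
apply: continuousB; last exact: cvg_cst.
apply: continuousM; first exact: cvg_cst.
exact: cvg_id.
Qed.

Lemma sgn_sqrt_le (b : bool) (a : R) : sgnR b * Num.sqrt a <= Num.sqrt a.
Proof.
have h := sqrtr_ge0 a.
by case: b; rewrite /sgnR ?mul1r ?mulN1r //; lra.
Qed.

Lemma root_exists s x : 0 < x -> (forall i, 0 <= k i ^+ 2 * x - omega i ^+ 2) ->
  0 <= f_sigma omega k s x -> exists y, is_pos_root omega k s y.
Proof.
move=> x0 dx fx.
set K : R := n%:R^-1 * \sum_(i < n) `|k i|.
have K0 : 0 <= K by rewrite mulr_ge0 ?invr_ge0 ?ler0n ?sumr_ge0.
set X := x + K ^+ 2 + 1.
have xX : x <= X by rewrite /X; have := sqr_ge0 K; lra.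
have X0 : 0 < X by lra.
have hX : f_sigma omega k s X < 0.
  have sX0 : 0 < Num.sqrt X by rewrite sqrtr_gt0.
  have KsX : K < Num.sqrt X.
    rewrite -(ger0_norm K0) -sqrtr_sqr ltr_sqrt //; rewrite /X; lra.
  have le1 : n%:R^-1 * \sum_(i < n) sgnR (nth true s i) * Num.sqrt (k i ^+ 2 * X - omega i ^+ 2)
       <= K * Num.sqrt X.
    rewrite /K -mulrA ler_wpM2l ?invr_ge0 ?ler0n // mulr_suml.
    apply: ler_sum => i _.
    apply: le_trans (sgn_sqrt_le _ _) _.
    rewrite -sqrtr_sqr -sqrtrM ?sqr_ge0 //.
    apply: ler_wsqrtr; have := sqr_ge0 (omega i); lra.
  have : K * Num.sqrt X < Num.sqrt X * Num.sqrt X by rewrite ltr_pM2r.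
  rewrite -expr2 sqr_sqrtr ?ltW // /f_sigma; lra.
have cw : {within `[x, X], continuous (f_sigma omega k s)}.
  by apply: continuous_subspaceT; exact: f_cont.
have hv : Num.min (f_sigma omega k s x) (f_sigma omega k s X) <= 0 <=
    Num.max (f_sigma omega k s x) (f_sigma omega k s X).
  by rewrite ge_min le_max fx (ltW hX) orbT.
have [c cI fc] := @IVT R (f_sigma omega k s) x X 0 xX cw hv.
move: cI; rewrite in_itv /= => /andP [xc cX].
exists c; split => //; first lra.
split => // i; apply: le_trans (dx i) _.
have := sqr_ge0 (k i); nra.
Qed.

Lemma neg_of_noroot s : no_pos_root omega k s ->
  forall x, 0 < x -> (forall i, 0 <= k i ^+ 2 * x - omega i ^+ 2) ->
  f_sigma omega k s x < 0.
Proof.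
move=> nr x x0 dx; rewrite ltNge; apply/negP => fx.
by have [y] := @root_exists s x x0 dx fx; apply: nr.
Qed.

Lemma sgn_le (a b : bool) (y : R) : 0 <= y -> (b = false -> a = false) ->
  sgnR a * y <= sgnR b * y.
Proof.
move=> y0; case: a; case: b => //= h; rewrite /sgnR ?mul1r ?mulN1r; try lra.
Qed.

Lemma sum_cmp (g : 'I_n -> R) s t (p j : 'I_n) : (p <= j)%N ->
  (forall i i' : 'I_n, (i <= i')%N -> g i' <= g i) -> (forall i, 0 <= g i) ->
  nth true s p = false -> nth true t j = false -> nth true t p = (p != j) ->
  (forall i : 'I_n, i != j -> nth true t i = false -> nth true s i = false) ->
  \sum_(i < n) sgnR (nth true s i) * g i <= \sum_(i < n) sgnR (nth true t i) * g i.
Proof.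
move=> pj gdec g0 sp tj tp hi.
case: (eqVneq p j) => [epj|npj].
  apply: ler_sum => i _; apply: sgn_le => // ti.
  case: (eqVneq i j) => [->|nij]; first by rewrite -epj.
  exact: hi.
rewrite [X in X <= _](bigD1 j) //= [X in _ <= X](bigD1 j) //=.
rewrite [X in _ + X <= _](bigD1 p) ?npj //= [X in _ <= _ + X](bigD1 p) ?npj //=.
rewrite !addrA; apply: lerD.
  have gjp := gdec _ _ pj; have := g0 j; have := g0 p.
  rewrite sp tj tp npj /sgnR; case: (nth true s j); lra.
apply: ler_sum => i /andP [ij ip]; apply: sgn_le => //; exact: hi.
Qed.

Lemma f_le s t x : 
  \sum_(i < n) sgnR (nth true s i) * Num.sqrt (k i ^+ 2 * x - omega i ^+ 2) <=
  \sum_(i < n) sgnR (nth true t i) * Num.sqrt (k i ^+ 2 * x - omega i ^+ 2) ->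
  f_sigma omega k s x <= f_sigma omega k t x.
Proof. by move=> h; rewrite /f_sigma lerD2l ler_wpM2l ?invr_ge0 ?ler0n. Qed.

Lemma g_dec x : (forall i, 0 < k i) ->
  (forall i j : 'I_n, (i <= j)%N -> `|omega i / k i| <= `|omega j / k j|) ->
  (forall i j : 'I_n, (i <= j)%N -> k j <= k i) ->
  (forall i, 0 <= k i ^+ 2 * x - omega i ^+ 2) ->
  forall i i' : 'I_n, (i <= i')%N ->
   Num.sqrt (k i' ^+ 2 * x - omega i' ^+ 2) <= Num.sqrt (k i ^+ 2 * x - omega i ^+ 2).
Proof.
move=> kp ic3 ic4 dx i j ij; apply: ler_wsqrtr.
have ki := kp i; have kj := kp j; have kji := ic4 _ _ ij.
have h := ic3 _ _ ij.
have : (omega i / k i) ^+ 2 <= (omega j / k j) ^+ 2.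
  by rewrite -[X in X <= _]real_normK ?num_real // -[X in _ <= X]real_normK ?num_real // lerXn2r ?nnegrE.
have ei : omega i = (omega i / k i) * k i by rewrite divfK ?gt_eqF.
have ej : omega j = (omega j / k j) * k j by rewrite divfK ?gt_eqF.
have dxi := dx i.
move: (omega i / k i) (omega j / k j) ei ej dxi => a b -> -> dxi hab.
have xa : 0 <= x - a ^+ 2.
  have : 0 <= k i ^+ 2 * (x - a ^+ 2) by rewrite mulrBr; move: dxi; rewrite exprMn; lra.
  by rewrite pmulr_rge0 // exprn_gt0.
have kk : k j ^+ 2 <= k i ^+ 2 by rewrite !expr2; nra.
rewrite !exprMn.
have : k j ^+ 2 * (x - b ^+ 2) <= k i ^+ 2 * (x - a ^+ 2).
  apply: le_trans (_ : k j ^+ 2 * (x - a ^+ 2) <= _).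
    by rewrite ler_wpM2l ?sqr_ge0 //; lra.
  by rewrite ler_wpM2r.
rewrite !mulrBr; lra.
Qed.
End A.
Theorem theorem2 (R : realType) (n : nat) (omega k : 'I_n -> R) :
  (2 <= n)%N ->
  (forall i, 0 < k i) ->
  \sum_(i < n) omega i = 0 ->                                   (* IC1 *)
  (exists i, omega i != 0) ->                                   (* IC2 *)
  (forall i j : 'I_n, (i <= j)%N ->
     `|omega i / k i| <= `|omega j / k j|) ->                    (* IC3 *)
  (forall i j : 'I_n, (i <= j)%N -> k j <= k i) ->               (* IC4 *)
  [/\
   (* (1) *)
   (no_pos_root omega k (nseq n true) ->
      forall sigma', size sigma' = n -> no_pos_root omega k sigma'),
   (* (2) *)
   (forall sigma, size sigma = n -> count negb sigma = 1%N ->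
      no_pos_root omega k sigma ->
      forall sigma', size sigma' = n -> (binval sigma' < binval sigma)%N ->
        no_pos_root omega k sigma')
  & (* (3): l is the 1-based position of the second-to-last -1 entry *)
   (forall sigma, size sigma = n -> (2 <= count negb sigma)%N ->
      no_pos_root omega k sigma ->
      forall l : nat, (0 < l <= n)%N -> nth true sigma l.-1 = false ->
        count negb (drop l sigma) = 1%N ->
        forall rho2', size rho2' = (n - l)%N ->
          (binval rho2' < binval (drop l sigma))%N ->
          no_pos_root omega k (take l sigma ++ rho2'))].
Proof.
move=> n2 kp ic1 ic2 ic3 ic4.
have dec x dx := @g_dec R n omega k x kp ic3 ic4 dx.
have g0 x (i : 'I_n) : 0 <= Num.sqrt (k i ^+ 2 * x - omega i ^+ 2) by exact: sqrtr_ge0.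
split.
- move=> nr s' _ x [x0 [dx fx]].
  have := @neg_of_noroot R n omega k _ nr x x0 dx.
  have : f_sigma omega k s' x <= f_sigma omega k (nseq n true) x.
    apply: f_le; apply: ler_sum => i _; apply: sgn_le => //.
    by rewrite nth_nseq ltn_ord.
  by rewrite fx; lra.
- move=> sg sz c1 nr s' sz' lt x [x0 [dx fx]].
  have [p [j [pj jt tj sp hi]]] := @binval_key s' sg (etrans sz' (esym sz)) c1 lt.
  rewrite sz in jt.
  have pn : (p < n)%N by apply: leq_ltn_trans jt.
  have := @neg_of_noroot R n omega k _ nr x x0 dx.
  have : f_sigma omega k s' x <= f_sigma omega k sg x.
    apply: f_le.
    apply: (@sum_cmp R n _ s' sg (Ordinal pn) (Ordinal jt)) => //=.
    + exact: dec.
    + change (nth true sg p = (p != j)).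
      case: (eqVneq p j) => [->|npj]; first by rewrite tj.
      exact: hi.
    + by move=> i ij; rewrite hi.
  by rewrite fx; lra.
- move=> sg sz c2 nr l /andP [l0 ln] _ cd r2 szr lt x [x0 [dx fx]].
  have szd : size r2 = size (drop l sg) by rewrite size_drop sz.
  have [p [j [pj jt tj sp hi]]] := @binval_key r2 (drop l sg) szd cd lt.
  rewrite size_drop sz in jt.
  have Jn : (l + j < n)%N by rewrite -ltn_subRL.
  have Pn : (l + p < n)%N by apply: leq_ltn_trans Jn; rewrite leq_add2l.
  have szt : size (take l sg) = l by rewrite size_takel // sz.
  have nthc i : nth true (take l sg ++ r2) i =
      if (i < l)%N then nth true sg i else nth true r2 (i - l).
    by rewrite nth_cat szt; case: ifP => // il; rewrite nth_take.
  rewrite nth_drop in tj.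
  have := @neg_of_noroot R n omega k _ nr x x0 dx.
  have : f_sigma omega k (take l sg ++ r2) x <= f_sigma omega k sg x.
    apply: f_le.
    apply: (@sum_cmp R n _ _ sg (Ordinal Pn) (Ordinal Jn)) => //=.
    + by rewrite leq_add2l.
    + exact: dec.
    + by rewrite nthc ltnNge leq_addr /= addKn.
    + change (nth true sg (l + p) = (l + p != l + j)%N).
      rewrite eqn_add2l; case: (eqVneq p j) => [->|npj]; first by rewrite tj.
      by have := hi p npj; rewrite nth_drop.
    + move=> i ij ti; rewrite nthc; case: ifP => il //.
      have ie : i = (l + (i - l))%N :> nat by rewrite subnKC // leqNgt il.
      have ij' : (i - l)%N != j.
        apply: contraNneq ij => e; apply/eqP/val_inj => /=.
        by rewrite ie e.
      by have := hi _ ij'; rewrite nth_drop -ie ti.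
  by rewrite fx; lra.
Qed.
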